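(* Let $j\in[m]$, $r_j\in[0,1]$, and let $\mathbf{x}=(\mathbf{x}_1,\dots,\mathbf{x}_n)$ and $\mathbf{y}=(\mathbf{y}_1,\dots,\mathbf{y}_n)$ be Generalized Nash equilibria of $G^{(2)}$ with $\mathbf{x}_T^{(j)}=\mathbf{y}_T^{(j)}=r_j$. If $0<x_{ij}<y_{ij}$ for some $i\in[n]$, then $\mathbf{x}_i$ is of Type II or $\mathbf{y}_i$ is of Type II.
   Context: $G^{(2)}$ is a Fragile multi-CPR Game with $n\ge1$ players and $m\ge1$ CPRs: $[k]=\{1,\dots,k\}$, $C_m=\{(x_1,\dots,x_m)\in[0,1]^m:\sum_j x_j\le1\}$, $\mathcal{C}_n=\prod_{i\in[n]}C_m$, $\mathcal{C}_{-i}=\prod_{[n]\setminus\{i\}}C_m$. A profile is $\mathbf{x}=(\mathbf{x}_1,\dots,\mathbf{x}_n)$, $\mathbf{x}_i=(x_{i1},\dots,x_{im})$; write $\mathbf{x}=(\mathbf{x}_i,\mathbf{x}_{-i})$; $\mathbf{x}_T^{(j)}=\sum_i x_{ij}$, $\mathbf{x}_T^{j|i}=\sum_{\ell\ne i}x_{\ell j}$. Each CPR $j$ has return rate $\mathcal{R}_j(t)>1$ and failure probability $p_j(t)\in[0,1]$; each player $i$ has parameters $a_i,k_i$. $\mathcal{F}_{ij}(t)=(\mathcal{R}_j(t)-1)^{a_i}(1-p_j(t))-k_ip_j(t)$; utility $\mathcal{V}_i(\mathbf{x}_i;\mathbf{x}_{-i})=\sum_j x_{ij}^{a_i}\mathcal{F}_{ij}(\mathbf{x}_T^{(j)})$.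 Assumption: (1) $p_j(0)=0$, $p_j(t)=1$ for $t\ge1$; (2) $a_i\in(0,1]$, $k_i>0$; (3) each $\mathcal{F}_{ij}$ (continuous on $[0,1]$) has strictly negative first and second derivatives on $(0,1)$. $\omega_{ij}\in(0,1)$ is the unique zero of $\mathcal{F}_{ij}$ in $(0,1)$. $A(\mathbf{x}_{-i})=\{j:\mathbf{x}_T^{j|i}<\omega_{ij}\}$. $\vartheta_i(\mathbf{x}_{-i})=C_m\cap\big(\prod_{j\in A(\mathbf{x}_{-i})}[0,\omega_{ij}-\mathbf{x}_T^{j|i}]\times\prod_{j\notin A(\mathbf{x}_{-i})}\{0\}\big)$. A Generalized Nash equilibrium is $\mathbf{x}\in\mathcal{C}_n$ with, for all $i$, $\mathbf{x}_i\in\vartheta_i(\mathbf{x}_{-i})$ and $\mathcal{V}_i(\mathbf{x}_i;\mathbf{x}_{-i})\ge\mathcal{V}_i(\mathbf{z};\mathbf{x}_{-i})$ for all $\mathbf{z}\in\vartheta_i(\mathbf{x}_{-i})$. $\psi_{ij}(x;s)=x\,\mathcal{F}_{ij}'(x+s)+a_i\mathcal{F}_{ij}(x+s)$. For a GNE $\mathbf{x}$: $J_{\mathbf{x}_{-i}}=\{j\in A(\mathbf{x}_{-i}):x_{ij}\ne0\}$; $\mathbf{x}_i$ is of Type I if $\sum_{j\in J_{\mathbf{x}_{-i}}}x_{ij}<1$ and $\psi_{ij}(x_{ij};\mathbf{x}_T^{j|i})=0$ for all $j\in J_{\mathbf{x}_{-i}}$; of Type II if $\sum_{j\in J_{\mathbf{x}_{-i}}}x_{ij}=1$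 and there is $\kappa_0\ge0$ with $x_{ij}^{a_i-1}\psi_{ij}(x_{ij};\mathbf{x}_T^{j|i})=\kappa_0$ for all $j\in J_{\mathbf{x}_{-i}}$. *)

(* Defs.v *)
From HB Require Import structures.
From mathcomp Require Import all_boot all_order all_algebra.
From mathcomp Require Import all_classical all_reals all_analysis.
Set Implicit Arguments. Unset Strict Implicit. Unset Printing Implicit Defensive.
Import Order.TTheory GRing.Theory Num.Theory.
Import numFieldNormedType.Exports.
Local Open Scope classical_set_scope.
Local Open Scope ring_scope.

(* Data of a Fragile multi-CPR game G^(2) with n players and m CPRs. *)
Record cpr_game (R : realType) (n m : nat) := CprGame {
  ret : 'I_m -> R -> R;
  pfail : 'I_m -> R -> R;
  a_ : 'I_n -> R;
  k_ : 'I_n -> R;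
  omega : 'I_n -> 'I_m -> R  (* omega_ij, the zero of F_ij in (0,1) *)
}.

Section Game.
Variables (R : realType) (n m : nat) (G : cpr_game R n m).

Definition F (i : 'I_n) (j : 'I_m) (t : R) : R :=
  (ret G j t - 1) `^ (a_ G i) * (1 - pfail G j t) - k_ G i * pfail G j t.

(* Standing assumption of the paper, plus omega_ij being the zero of F_ij in (0,1)
   (uniqueness follows from strict monotonicity of F_ij). *)
Definition game_assumptions : Prop :=
  (forall j t, 1 < ret G j t) /\
  (forall j t, 0 <= pfail G j t <= 1) /\
  (forall j, pfail G j 0 = 0) /\
  (forall j t, 1 <= t -> pfail G j t = 1) /\
  (forall i, 0 < a_ G i <= 1) /\
  (forall i, 0 < k_ G i) /\
  (forall i j, {within `[0, 1], continuous (F i j)}) /\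
  (forall i j t, 0 < t < 1 ->
     [/\ derivable (F i j) t 1, derive1 (F i j) t < 0,
         derivable (derive1 (F i j)) t 1 & derive1 (derive1 (F i j)) t < 0]) /\
  (forall i j, 0 < omega G i j < 1 /\ F i j (omega G i j) = 0).

Definition profile := 'I_n -> 'I_m -> R.

Definition xT (x : profile) (j : 'I_m) : R := \sum_(l < n) x l j.
Definition xTo (x : profile) (i : 'I_n) (j : 'I_m) : R :=
  \sum_(l < n | l != i) x l j.

Definition inCm (z : 'I_m -> R) : Prop :=
  (forall j, 0 <= z j <= 1) /\ \sum_(j < m) z j <= 1.

Definition inA (x : profile) (i : 'I_n) (j : 'I_m) : bool := xTo x i j < omega G i j.

Definition theta (x : profile) (i : 'I_n) (z : 'I_m -> R) : Prop :=
  inCm z /\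
  forall j, (inA x i j -> 0 <= z j <= omega G i j - xTo x i j) /\
            (~~ inA x i j -> z j = 0).

Definition V (i : 'I_n) (z : 'I_m -> R) (x : profile) : R :=
  \sum_(j < m) z j `^ (a_ G i) * F i j (z j + xTo x i j).

Definition GNE (x : profile) : Prop :=
  (forall i, inCm (x i)) /\
  forall i, theta x i (x i) /\
            forall z, theta x i z -> V i z x <= V i (x i) x.

Definition psi (i : 'I_n) (j : 'I_m) (u s : R) : R :=
  u * derive1 (F i j) (u + s) + a_ G i * F i j (u + s).

Definition inJ (x : profile) (i : 'I_n) (j : 'I_m) : bool :=
  inA x i j && (x i j != 0).

Definition TypeI (x : profile) (i : 'I_n) : Prop :=
  \sum_(j < m | inJ x i j) x i j < 1 /\
  forall j, inJ x i j -> psi i j (x i j) (xTo x i j) = 0.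

Definition TypeII (x : profile) (i : 'I_n) : Prop :=
  \sum_(j < m | inJ x i j) x i j = 1 /\
  exists k0, 0 <= k0 /\
    forall j, inJ x i j -> x i j `^ (a_ G i - 1) * psi i j (x i j) (xTo x i j) = k0.

End Game.

(* Main.v *)
Require Import Defs.
From HB Require Import structures.
From mathcomp Require Import all_boot all_order all_algebra.
From mathcomp Require Import all_classical all_reals all_analysis.
From mathcomp Require Import ring lra.
Import Order.TTheory GRing.Theory Num.Theory.
Import numFieldNormedType.Exports.
Local Open Scope ring_scope.
Local Open Scope classical_set_scope.


Lemma right_max (R : realType) (f : R -> R) (c D d : R) :
  is_derive c 1 f D -> 0 < d -> (forall t, 0 < t < d -> f (c + t) <= f c) -> D <= 0.
Proof.
move=> [fdrv <-] d0 cmax.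
rewrite ['D_1 f c]cvg_at_rightE; last exact: fdrv.
apply: limr_le.
  rewrite -(cvg_at_rightE (fun h : R => h^-1 *: ((f \o shift c) _ - f c))) //.
  apply: cvg_trans fdrv; apply: cvg_app.
  move=> A [e egt0 Ae]; exists e => // x xe xgt0; apply: Ae => //.
  exact/lt0r_neq0.
near=> h; apply: mulr_ge0_le0.
  by rewrite invr_ge0; apply: ltW; near: h; exists 1 => /=.
rewrite subr_le0 [_%:A]mulr1 /= addrC; apply: cmax; apply/andP; split.
  by near: h; exists 1 => /=.
near: h; exists d => //= h; rewrite /ball_ /= sub0r normrN => hb _.
exact: le_lt_trans (ler_norm h) hb.

Unshelve. all: by end_near. Qed.

Set Implicit Arguments.
Section S.
Variables (R : realType) (n m : nat) (G : cpr_game R n m).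
Hypothesis HG : game_assumptions G.
Variables (x : profile R n m) (Hx : GNE G x) (i : 'I_n).

Definition gg k u := u `^ (a_ G i) * F G i k (u + xTo x i k).
Definition DD k := x i k `^ (a_ G i - 1) * psi G i k (x i k) (xTo x i k).

Lemma F_der (k : 'I_m) (t : R) : 0 < t < 1 -> is_derive t 1 (F G i k) (derive1 (F G i k) t).
Proof.
move=> ht; case: HG => _ [_ [_ [_ [_ [_ [_ [hder _]]]]]]].
have [h1 _ _ _] := hder i k t ht.
by apply: DeriveDef => //; rewrite derive1E.
Qed.

Lemma F'_neg (k : 'I_m) (t : R) : 0 < t < 1 -> derive1 (F G i k) t < 0.
Proof.
move=> ht; case: HG => _ [_ [_ [_ [_ [_ [_ [hder _]]]]]]].
by have [_ h2 _ _] := hder i k t ht.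
Qed.

Lemma a_pos : 0 < a_ G i.
Proof. by case: HG => _ [_ [_ [_ [ha _]]]]; case/andP: (ha i). Qed.

Lemma om_bounds k : 0 < omega G i k < 1 /\ F G i k (omega G i k) = 0.
Proof. by case: HG => _ [_ [_ [_ [_ [_ [_ [_ hom]]]]]]]. Qed.

Lemma g_der (k : 'I_m) (u : R) : 0 < u -> 0 < u + xTo x i k < 1 ->
  is_derive u 1 (gg k) (u `^ (a_ G i - 1) * psi G i k u (xTo x i k)).
Proof.
move=> u0 us.
have h1 := is_derive1_powR (a_ G i) u0.
have h2 : is_derive u 1 (F G i k \o shift (xTo x i k)) (derive1 (F G i k) (u + xTo x i k) * 1).
  apply: is_derive1_comp; last exact: is_derive_shift.
  exact: F_der.
have := is_deriveM h1 h2.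
have -> : ((@powR R)^~ (a_ G i) * (F G i k \o shift (xTo x i k))) = gg k.
  by apply/funext => v; rewrite /gg.
move=> h; apply: (is_derive_eq h).
have ->: u `^ (a_ G i) = u `^ (a_ G i - 1) * u `^ 1.
  by rewrite -powRD ?subrK // (gt_eqF u0) implybT.
rewrite powRr1 ?ltW //.
rewrite /psi /=.
rewrite /= /GRing.scale /=. ring.
Qed.

Lemma xge0 k : 0 <= x i k.
Proof. by case: Hx => h _; case: (h i) => /(_ k) /andP[]. Qed.

Lemma sge0 k : 0 <= xTo x i k.
Proof.
rewrite /xTo; apply: sumr_ge0 => l _.
by case: Hx => h _; case: (h l) => /(_ k) /andP[].
Qed.

Lemma sum_le1 : \sum_(k < m) x i k <= 1.
Proof. by case: Hx => h _; case: (h i). Qed.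

Lemma pos_inA k : 0 < x i k -> inA G x i k /\ x i k <= omega G i k - xTo x i k.
Proof.
move=> xp; case: Hx => _ /(_ i) [[_ /(_ k) [h1 h2]] _].
case: (boolP (inA G x i k)) => hA.
  by split => //; case/andP: (h1 hA).
by move: xp; rewrite (h2 hA) ltxx.
Qed.


Definition P (c : 'I_m -> R) (t : R) : 'I_m -> R := fun k => x i k + c k * t.

Lemma feas (c : 'I_m -> R) (t : R) :
  (forall k, c k != 0 -> 0 <= x i k + c k * t <= omega G i k - xTo x i k) ->
  \sum_(k < m) (x i k + c k * t) <= 1 -> theta G x i (P c t).
Proof.
move=> hc hsum.
case: Hx => hC /(_ i) [[_ hth] _].
split.
  split; last by [].
  move=> k; case: (eqVneq (c k) 0) => ck.
    by rewrite /P ck mul0r addr0; case: (hC i) => /(_ k).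
  have /andP[h0 h1] := hc k ck; rewrite /P h0 /=.
  have [oo _] := om_bounds k; case/andP: oo => o0 o1; have := sge0 k. lra.
move=> k; split.
  move=> hA; case: (eqVneq (c k) 0) => ck.
    by rewrite /P ck mul0r addr0; exact: (hth k).1 hA.
  exact: hc.
move=> hA; case: (eqVneq (c k) 0) => ck.
  by rewrite /P ck mul0r addr0; exact: (hth k).2 hA.
have /andP[h0 h1] := hc k ck.
move: hA; rewrite /inA -leNgt => hA.
apply/eqP; rewrite eq_le h0 andbT /P. lra.
Qed.

Lemma opt (c : 'I_m -> R) (d : R) :
  (forall k, c k != 0 -> 0 < x i k) -> 0 < d ->
  (forall t, 0 < t < d -> theta G x i (P c t)) ->
  \sum_(k < m) c k * DD k <= 0.
Proof.
move=> hpos d0 hth.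
pose h := fun k (t : R) => gg k (x i k + c k * t) - gg k (x i k).
have hd : forall k : 'I_m, is_derive (0:R) 1 (h k) (c k * DD k).
  move=> k; case: (eqVneq (c k) 0) => ck.
    have -> : h k = cst 0 by apply/funext => t; rewrite /h ck mul0r addr0 subrr.
    rewrite ck mul0r; exact: is_derive_cst.
  have xp := hpos k ck; have [hA hle] := pos_inA k xp.
  have inner : is_derive (0:R) 1 (fun t : R => x i k + c k * t) (c k).
    have := is_deriveD (is_derive_cst (x i k) (0:R) (1:R)) (is_deriveZ (c k) (is_derive_id (0:R) (1:R))).
    by rewrite add0r /GRing.scale /= mulr1.
  have hc : is_derive (0:R) 1 (gg k \o (fun t : R => x i k + c k * t)) (DD k * c k).
    apply: is_derive1_comp; rewrite /= mulr0 addr0.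
    apply: g_der => //.
    have [oo _] := om_bounds k; case/andP: oo => o0 o1; have := sge0 k.
    move=> s0; apply/andP; split; lra.
  have := is_deriveB hc (is_derive_cst (gg k (x i k)) (0:R) (1:R)).
  rewrite subr0 mulrC.
  have -> : (gg k \o (fun t : R => x i k + c k * t)) - cst (gg k (x i k)) = h k.
    by apply/funext => t.
  by [].
have hs := is_derive_sum hd.
apply: (@right_max R (\sum_(k < m) h k) 0 _ d) => // t ht.
rewrite add0r !fct_sumE.
have -> : \sum_(k < m) h k 0 = 0 by apply: big1 => k _; rewrite /h mulr0 addr0 subrr.
rewrite sumrB subr_le0.
case: Hx => _ /(_ i) [_ hopt].
have := hopt (P c t) (hth t ht).
by rewrite /V /gg /P.
Qed.


Definition ee (k : 'I_m) : 'I_m -> R := fun l => if l == k then 1 else 0.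

Lemma sum_ee (k : 'I_m) (w : 'I_m -> R) : \sum_(l < m) ee k l * w l = w k.
Proof.
rewrite (bigD1 k) //= /ee eqxx mul1r big1 ?addr0 // => l /negbTE ->.
by rewrite mul0r.
Qed.

Lemma sum_split (c : 'I_m -> R) (t : R) :
  \sum_(k < m) (x i k + c k * t) = \sum_(k < m) x i k + (\sum_(k < m) c k) * t.
Proof. by rewrite big_split /= -mulr_suml. Qed.

Lemma D_ge0 k : 0 < x i k -> 0 <= DD k.
Proof.
move=> xp.
have [_ hle] := pos_inA k xp.
have h := @opt (fun l => - ee k l) (x i k).
have : \sum_(l < m) - ee k l * DD l <= 0.
  apply: h => //.
    move=> l; rewrite /ee; case: (eqVneq l k) => [-> //|]; by rewrite oppr0 eqxx.
  move=> t /andP[t0 tx]; apply: feas.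
    move=> l; rewrite /ee; case: (eqVneq l k) => [-> _|]; last by rewrite oppr0 eqxx.
    apply/andP; split; lra.
  rewrite sum_split.
  have -> : \sum_(k0 < m) - ee k k0 = -1.
    rewrite sumrN; congr (- _).
    transitivity (\sum_(l < m) ee k l * 1); last exact: sum_ee.
    by apply: eq_bigr => l _; rewrite mulr1.
  have := sum_le1; lra.
under eq_bigr do rewrite mulNr.
rewrite sumrN sum_ee; lra.
Qed.

Lemma x_lt k : 0 < x i k -> x i k < omega G i k - xTo x i k.
Proof.
move=> xp; have [_ hle] := pos_inA k xp.
rewrite lt_neqAle hle andbT; apply/negP => /eqP he.
have := D_ge0 k xp; apply/negP; rewrite -ltNge.
have [oo hF] := om_bounds k; case/andP: oo => o0 o1.
rewrite /DD /psi (_ : x i k + xTo x i k = omega G i k); last by rewrite he subrK.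
rewrite hF mulr0 addr0 pmulr_rlt0 ?powR_gt0 // pmulr_rlt0 //.
by apply: F'_neg; rewrite o0 o1.
Qed.


Lemma D_le0_slack k : \sum_(l < m) x i l < 1 -> 0 < x i k -> DD k <= 0.
Proof.
move=> hs xp.
have hlt := x_lt k xp.
have h := @opt (ee k) (Num.min (omega G i k - xTo x i k - x i k) (1 - \sum_(l < m) x i l)).
have : \sum_(l < m) ee k l * DD l <= 0.
  apply: h.
  - by move=> l; rewrite /ee; case: (eqVneq l k) => [-> //|]; rewrite eqxx.
  - by rewrite lt_min !subr_gt0 hlt hs.
  move=> t /andP[t0]; rewrite lt_min => /andP[t1 t2]; apply: feas.
    move=> l; rewrite /ee; case: (eqVneq l k) => [-> _|]; last by rewrite eqxx.
    have x0 := xge0 k; apply/andP; split; lra.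
  rewrite sum_split.
  have -> : \sum_(k0 < m) ee k k0 = 1.
    transitivity (\sum_(l < m) ee k l * 1); last exact: sum_ee.
    by apply: eq_bigr => l _; rewrite mulr1.
  lra.
by rewrite sum_ee.
Qed.

Lemma D_le_pair k l : k != l -> 0 < x i k -> 0 < x i l -> DD k <= DD l.
Proof.
move=> kl xk xl.
have hlt := x_lt k xk.
have [_ hle] := pos_inA l xl.
have h := @opt (fun q => ee k q - ee l q) (Num.min (omega G i k - xTo x i k - x i k) (x i l)).
have : \sum_(q < m) (ee k q - ee l q) * DD q <= 0.
  apply: h.
  - move=> q; rewrite /ee; case: (eqVneq q k) => [-> //|qk].
    by case: (eqVneq q l) => [-> //|ql]; rewrite subrr eqxx.
  - by rewrite lt_min !subr_gt0 hlt xl.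
  move=> t /andP[t0]; rewrite lt_min => /andP[t1 t2]; apply: feas.
    move=> q; rewrite /ee; case: (eqVneq q k) => [-> _|qk].
      rewrite (negbTE kl) subr0; have x0 := xge0 k; apply/andP; split; lra.
    case: (eqVneq q l) => [-> _|ql]; last by rewrite subrr eqxx.
    apply/andP; split; lra.
  rewrite sum_split.
  have -> : \sum_(q < m) (ee k q - ee l q) = 0.
    rewrite sumrB.
    transitivity (\sum_(q < m) ee k q * 1 - \sum_(q < m) ee l q * 1).
      by congr (_ - _); apply: eq_bigr => q _; rewrite mulr1.
    by rewrite !sum_ee subrr.
  have := sum_le1; lra.
under eq_bigr do rewrite mulrBl.
rewrite sumrB !sum_ee; lra.
Qed.

Lemma tight_TypeII : \sum_(l < m) x i l = 1 -> TypeII G x i.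
Proof.
move=> hs.
have pos_of_J j : inJ G x i j -> 0 < x i j.
  by case/andP => _ hx; rewrite lt_neqAle eq_sym hx xge0.
split.
  rewrite big_mkcond /= -hs; apply: eq_bigr => k _; case: ifP => // /negbT.
  rewrite /inJ negb_and negbK => /orP[hA|/eqP -> //].
  by case: Hx => _ /(_ i) [[_ /(_ k) [_ hz]] _]; rewrite hz.
case: (pickP (fun k => 0 < x i k)) => [k0 hk0|hnone].
  exists (DD k0); split; first exact: D_ge0.
  move=> j /pos_of_J xj; rewrite -/(DD j).
  case: (eqVneq j k0) => [-> //|ne].
  by apply/eqP; rewrite eq_le !D_le_pair // eq_sym.
exists 0; split => // j /pos_of_J xj.
by move: (hnone j); rewrite xj.
Qed.

Lemma psi0_slack k : \sum_(l < m) x i l < 1 -> 0 < x i k ->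
  psi G i k (x i k) (xTo x i k) = 0.
Proof.
move=> hs xp.
have : DD k = 0 by apply/eqP; rewrite eq_le D_le0_slack // D_ge0.
by move/eqP; rewrite /DD mulf_eq0 (gt_eqF (powR_gt0 _ xp)) /= => /eqP.
Qed.

End S.
Unset Implicit Arguments.

Lemma xT_split (R : realType) (n m : nat) (x : profile R n m) i j :
  xT x j = x i j + xTo x i j.
Proof. by rewrite /xT /xTo (bigD1 i). Qed.

Theorem lemma11 (R : realType) (n m : nat) (G : cpr_game R n m)
  (HG : game_assumptions G) (j : 'I_m) (r : R) (hr : 0 <= r <= 1)
  (x y : profile R n m) (Hx : GNE G x) (Hy : GNE G y)
  (hxr : xT x j = r) (hyr : xT y j = r)
  (i : 'I_n) (hi : 0 < x i j < y i j) :
  TypeII G x i \/ TypeII G y i.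
Proof.
have sx := sum_le1 Hx i; have sy := sum_le1 Hy i.
case: (eqVneq (\sum_(l < m) x i l) 1) => [h|hx]; first by left; exact: tight_TypeII.
case: (eqVneq (\sum_(l < m) y i l) 1) => [h|hy]; first by right; exact: tight_TypeII.
have ltx : \sum_(l < m) x i l < 1 by rewrite lt_neqAle hx sx.
have lty : \sum_(l < m) y i l < 1 by rewrite lt_neqAle hy sy.
case/andP: hi => x0 xy.
have y0 : 0 < y i j by apply: lt_trans xy.
have px := psi0_slack HG Hx i j ltx x0.
have py := psi0_slack HG Hy i j lty y0.
rewrite /psi -(@xT_split _ _ _ x i j) hxr in px.
rewrite /psi -(@xT_split _ _ _ y i j) hyr in py.
have r0 : 0 < r by rewrite -hxr (@xT_split _ _ _ x i j); have := sge0 Hx i j; lra.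
have r1 : r < 1.
  have [_ hle] := pos_inA Hx i j x0.
  have [oo _] := om_bounds HG i j; case/andP: oo => o0 o1.
  rewrite -hxr (@xT_split _ _ _ x i j); lra.
have hF : derive1 (F G i j) r < 0 by apply: (F'_neg HG i j r); rewrite r0 r1.
have : x i j = y i j.
  apply: (mulIf (ltr0_neq0 hF)); apply: (addIr (a_ G i * F G i j r)).
  by rewrite px py.
by move=> e; move: xy; rewrite e ltxx.
Qed.
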